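(* Let $H_1,\dots,H_n$ be null hypotheses indexed by $\mathcal V=\{1,\dots,n\}$, and for each $v\in\mathcal V$ let $p_v$ be an observed random variable. Let $\bar{\mathcal S}=\{v: H_v \text{ is true}\}$ and $\mathcal S=\mathcal V\setminus\bar{\mathcal S}$. Let $\mathcal G=(\mathcal V,\mathcal E)$ be a directed acyclic graph such that whenever $H_v$ is false and $w$ is an ancestor of $v$ in $\mathcal G$, $H_w$ is also false (equivalently, if $v\in\bar{\mathcal S}$ then every descendant of $v$ is in $\bar{\mathcal S}$). For each $v$, let $\mathcal C_v$ be the set consisting of $v$ and all its descendants in $\mathcal G$, let $f_v:\mathbb R^{|\mathcal V|}\to\mathbb R$ be an arbitrary (measurable) function, and define \[F_v(c;x_{\mathcal V\setminus\mathcal C_v})=\Pr\big(f_v(u_{\mathcal C_v},x_{\mathcal V\setminus\mathcal C_v})\le c\big),\qquad \tilde p_v=F_v\big(f_v(p_{\mathcal C_v},p_{\mathcal V\setminus\mathcal C_v});p_{\mathcal V\setminus\mathcal C_v}\big),\] where $u_{\mathcal C_v}=\{u_w\}_{w\in\mathcal C_v}$ are i.i.d. $\mathrm{Uniform}[0,1]$. Assume that the null $p$-values $\{p_v\}_{v\in\bar{\mathcal S}}$ are mutually independent and independent of the nonnull $p$-values $\{p_v\}_{v\in\mathcal S}$. (a) If the null $p$-values are i.i.d. $\mathrm{Uniform}[0,1]$, then $\tilde p_v$ is super-uniform for every $v\in\bar{\mathcal S}$. (b) If the null $p$-values are super-uniform and, for every value of $p_{\mathcal V\setminus\mathcal C_v}$,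 $f_v$ is nondecreasing in $p_{\mathcal C_v}$ (entrywise), then $\tilde p_v$ is super-uniform for every $v\in\bar{\mathcal S}$.
   Context: A random variable $X$ is super-uniform if $\Pr(X\le c)\le c$ for all $c\in[0,1]$. *)

(* Defs.v *)
From HB Require Import structures.
From mathcomp Require Import all_boot all_order all_algebra.
From mathcomp Require Import all_classical all_reals all_analysis.
Set Implicit Arguments. Unset Strict Implicit. Unset Printing Implicit Defensive.
Import Order.TTheory GRing.Theory Num.Theory.
Local Open Scope classical_set_scope.
Local Open Scope ring_scope.

Section Defs.
Context {R : realType} {d : measure_display} {T : measurableType d}.

Definition super_uniform (P : probability T R) (X : T -> R) : Prop :=
  forall c : R, 0 <= c <= 1 -> (P [set t | (X t <= c)%R] <= c%:E)%E.

Definition uniform01 (P : probability T R) (X : T -> R) : Prop :=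
  forall A : set R, measurable A ->
    P (X @^-1` A) = uniform_prob (@ltr01 R) A.

Definition mutually_independent (n : nat) (P : probability T R)
    (X : 'I_n -> T -> R) : Prop :=
  forall (J : {set 'I_n}) (B : 'I_n -> set R),
    (forall i, measurable (B i)) ->
    P (\bigcap_(i in [set i | i \in J]) (X i @^-1` B i)) =
    (\prod_(i in J) P (X i @^-1` B i))%E.

Definition sigma_of (n : nat) (X : 'I_n -> T -> R) (J : {set 'I_n}) :
    set (set T) :=
  <<s [set E | exists i B, i \in J /\ measurable B /\ E = X i @^-1` B] >>.

Definition nulls_independent (n : nat) (P : probability T R)
    (X : 'I_n -> T -> R) (S0 : {set 'I_n}) : Prop :=
  forall (B : 'I_n -> set R) (E : set T),
    (forall v, measurable (B v)) -> sigma_of X (~: S0) E ->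
    P (E `&` \bigcap_(v in [set v | v \in S0]) (X v @^-1` B v)) =
    (P E * \prod_(v in S0) P (X v @^-1` B v))%E.

End Defs.

Definition acyclic (n : nat) (e : rel 'I_n) : Prop :=
  forall v w, e v w -> ~~ connect e w v.

Definition desc_set (n : nat) (e : rel 'I_n) (v : 'I_n) : {set 'I_n} :=
  [set w | connect e v w].

Definition splice (R : Type) (n : nat) (C : {set 'I_n}) (u x : 'I_n -> R) :
    n.-tuple R :=
  [tuple (if i \in C then u i else x i) | i < n].

Definition Fcdf {R : realType} {d' : measure_display} {T' : measurableType d'}
    (Q : probability T' R) (n : nat) (u : 'I_n -> T' -> R) (C : {set 'I_n})
    (f : n.-tuple R -> R) (c : R) (x : 'I_n -> R) : R :=
  fine (Q [set s | f (splice C (fun w => u w s) x) <= c]).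

Definition ptilde {R : realType} {d' : measure_display} {T' : measurableType d'}
    {d : measure_display} {T : measurableType d}
    (Q : probability T' R) (n : nat) (u : 'I_n -> T' -> R) (C : {set 'I_n})
    (f : n.-tuple R -> R) (p : 'I_n -> T -> R) (t : T) : R :=
  Fcdf Q u C f (f (splice C (fun w => p w t) (fun w => p w t)))
       (fun w => p w t).

(* Main.v *)
Require Import Defs.
From HB Require Import structures.
From mathcomp Require Import all_boot all_order all_algebra.
From mathcomp Require Import all_classical all_reals all_analysis.
Import Order.TTheory GRing.Theory Num.Theory.
Local Open Scope classical_set_scope.
Local Open Scope ring_scope.
Set Implicit Arguments. Unset Strict Implicit. Unset Printing Implicit Defensive.


Section gen.
Context {R : realType}.

Definition Hl : set (set R) :=
  [set A | A = setT \/ exists a : R, A = [set x | x <= a]].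

Lemma Hl_measurable A : Hl A -> measurable A.
Proof.
case=> [->|[a ->]]; first exact: measurableT.
rewrite (_ : [set x | x <= a] = `]-oo, a]%classic); last first.
  by apply/seteqP; split => x /=; rewrite in_itv.
exact: measurable_itv.
Qed.

Lemma Hl_gen : @measurable _ R = <<s Hl >>.
Proof.
apply/seteqP; split; last first.
  apply: smallest_sub; first exact: sigma_algebra_measurable.
  exact: Hl_measurable.
have -> : @measurable _ R = <<s measurable_realfun.RGenOInfty.G (R:=R) >>.
  exact: measurable_realfun.RGenOInfty.measurableE.
apply: smallest_sub; first exact: smallest_sigma_algebra.
move=> A [a ->].
have -> : `]a, +oo[%classic = setT `\` [set x : R | x <= a].
  apply/seteqP; split => x /=; rewrite in_itv /= andbT.
    by move=> ax; split => //; apply/negP; rewrite -ltNge.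
  by case=> _ /negP; rewrite -ltNge.
apply: sigma_algebraCD; apply: sub_sigma_algebra; right; exists a.
done.
Qed.

Lemma Hl_setI : setI_closed Hl.
Proof.
move=> A B [->|[a ->]] [->|[b ->]].
- by left; rewrite setIT.
- by right; exists b; rewrite setTI.
- by right; exists a; rewrite setIT.
right; exists (Order.min a b); apply/seteqP; split => x /=; rewrite le_min.
  by case=> -> ->.
by case/andP.
Qed.

Definition box n (B : 'I_n -> set R) : set (n.-tuple R) :=
  [set z | forall i, B i (tnth z i)].

Definition Gbox n : set (set (n.-tuple R)) :=
  [set A | exists B : 'I_n -> set R, (forall i, Hl (B i)) /\ A = box B].

Lemma box_measurable n (B : 'I_n -> set R) :
  (forall i, measurable (B i)) -> measurable (box B).
Proof.
move=> mB.
have -> : box B = \bigcap_(i in [set: 'I_n]) ((@tnth n R)^~ i @^-1` B i).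
  by apply/seteqP; split => z /= H i; [move=> _|]; apply: H.
apply: fin_bigcap_measurable; first exact: finite_finset.
move=> i _; rewrite -[X in measurable X]setTI.
exact: measurable_tnth.
Qed.

Lemma Gbox_setI n : setI_closed (@Gbox n).
Proof.
move=> _ _ [B [HB ->]] [B' [HB' ->]].
exists (fun i => B i `&` B' i); split; first by move=> i; exact: Hl_setI.
by apply/seteqP; split => z /=; [case=> H1 H2 i; split|move=> H; split => i; case: (H i)].
Qed.

Lemma Gbox_T n : @Gbox n setT.
Proof.
exists (fun=> setT); split; first by move=> i; left.
by apply/seteqP; split.
Qed.

Lemma tuple_gen n : @measurable _ (n.-tuple R) = <<s @Gbox n >>.
Proof.
apply/seteqP; split; last first.
  apply: smallest_sub; first exact: sigma_algebra_measurable.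
  move=> _ [B [HB ->]]; apply: box_measurable => i; exact: Hl_measurable.
apply: smallest_sub; first exact: smallest_sigma_algebra.
apply: (big_ind (fun S => S `<=` <<s @Gbox n >>)) => //.
  by move=> S1 S2 H1 H2 A [/H1|/H2].
move=> i _ _ [Y mY <-].
rewrite Hl_gen in mY.
have := @g_sigma_preimageE (n.-tuple R) ((R : measurableType _) : pointedType) setT ((@tnth n R)^~ i) Hl.
move=> /(congr1 (fun S => S ([set: n.-tuple R] `&` (@tnth n R)^~ i @^-1` Y))).
move=> E.
have : <<s [set: n.-tuple R], preimage_set_system [set: n.-tuple R] ((@tnth n R)^~ i) Hl >>
       ([set: n.-tuple R] `&` (@tnth n R)^~ i @^-1` Y) by rewrite E; exists Y.
suff sub : <<s [set: n.-tuple R], preimage_set_system [set: n.-tuple R] ((@tnth n R)^~ i) Hl >>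
   `<=` <<s @Gbox n >> by apply: sub.
apply: smallest_sub; first exact: smallest_sigma_algebra.
move=> _ [A HA <-]; apply: sub_sigma_algebra.
exists (fun j => if j == i then A else setT); split.
  by move=> j; case: ifP => _ //; left.
apply/seteqP; split => z /=.
  by case=> _ HzA j; case: ifP => // /eqP ->.
by move=> H; split => //; have := H i; rewrite eqxx.
Qed.

End gen.

Section main.
Context {R : realType} {d : measure_display} {T : measurableType d} (P : probability T R)
 {d' : measure_display} {T' : measurableType d'} (Q : probability T' R) (n : nat)
 (p : 'I_n -> T -> R) (X' : 'I_n -> T' -> R) (C : {set 'I_n}).
Hypothesis mp : forall i, measurable_fun setT (p i).
Hypothesis mX' : forall i, measurable_fun setT (X' i).

Definition Xt (t : T) : n.-tuple R := [tuple p i t | i < n].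
Definition Phi2 (ts : T * T') : n.-tuple R :=
  [tuple (if i \in C then X' i ts.2 else p i ts.1) | i < n].

Lemma mXt : measurable_fun setT Xt.
Proof.
apply/measurable_fun_tnthP => i.
rewrite (_ : _ \o _ = p i); first exact: mp.
by apply/funext => t /=; rewrite tnth_mktuple.
Qed.

Lemma mPhi2 : measurable_fun setT Phi2.
Proof.
apply/measurable_fun_tnthP => i.
have [iC|iC] := boolP (i \in C).
  rewrite (_ : _ \o _ = X' i \o snd); first exact: measurableT_comp.
  by apply/funext => t /=; rewrite tnth_mktuple iC.
rewrite (_ : _ \o _ = p i \o fst); first exact: measurableT_comp.
by apply/funext => t /=; rewrite tnth_mktuple (negbTE iC).
Qed.

Lemma measurable_finall {dd} {TT : measurableType dd} (J : pred 'I_n)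
  (g : 'I_n -> TT -> R) (B : 'I_n -> set R) :
  (forall i, measurable_fun setT (g i)) -> (forall i, measurable (B i)) ->
  measurable [set t | forall i, J i -> B i (g i t)].
Proof.
move=> mg mB.
have -> : [set t | forall i, J i -> B i (g i t)] =
   \bigcap_(i in [set i | J i]) (g i @^-1` B i).
  by apply/seteqP; split => t /= H i; apply: H.
apply: fin_bigcap_measurable.
  exact: finite_finset.
move=> i _; rewrite -[X in measurable X]setTI; exact: mg.
Qed.

Hypothesis HbP : forall B : 'I_n -> set R, (forall i, Hl (B i)) ->
  P [set t | forall i, B i (p i t)] =
  (P [set t | forall i, i \notin C -> B i (p i t)] * \prod_(i in C) P (p i @^-1` B i))%E.
Hypothesis HbQ : forall B : 'I_n -> set R, (forall i, Hl (B i)) ->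
  Q [set s | forall i, i \in C -> B i (X' i s)] = (\prod_(i in C) P (p i @^-1` B i))%E.

Lemma main_eq S : measurable S -> P (Xt @^-1` S) = (P \x Q)%E (Phi2 @^-1` S).
Proof.
move=> mS.
pose m1 := measure_function_pushforward__canonical__measure_function_Measure P mXt.
pose m2 := measure_function_pushforward__canonical__measure_function_Measure (P \x Q)%E mPhi2.
have -> : P (Xt @^-1` S) = m1 S by [].
have -> : (P \x Q)%E (Phi2 @^-1` S) = m2 S by [].
apply: (measure_unique (@Gbox R n) (fun=> setT)) => //.
- exact: tuple_gen.
- exact: Gbox_setI.
- by move=> _; exact: Gbox_T.
- by apply/seteqP; split => // x _; exists 0%N.
- move=> _ [B [HB ->]].
  rewrite /m1 /m2 /= /pushforward.
  have -> : Xt @^-1` box B = [set t | forall i, B i (p i t)].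
    by apply/seteqP; split => t /= H i; have := H i; rewrite tnth_mktuple.
  have -> : Phi2 @^-1` box B = [set t | forall i, i \notin C -> B i (p i t)] `*`
                              [set s | forall i, i \in C -> B i (X' i s)].
    apply/seteqP; split => -[t s] /=.
      move=> H; split => i iC; have := H i; rewrite tnth_mktuple.
        by rewrite (negbTE iC).
      by rewrite iC.
    case=> H1 H2 i; rewrite tnth_mktuple.
    by case: ifP => iC; [apply: H2|apply: H1; rewrite iC].
  have mB i : measurable (B i) by exact: Hl_measurable.
  rewrite product_measure1E; last 2 first.
    - exact: measurable_finall.
    - exact: measurable_finall.
  rewrite HbP //; congr (_ * _)%E; symmetry; exact: HbQ.
- move=> _; rewrite /m1 /= /pushforward preimage_setT probability_setT.
  exact: ltry.
Qed.

End main.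

Section indep.
Context {R : realType} {d : measure_display} {T : measurableType d} (P : probability T R)
  (n : nat) (p : 'I_n -> T -> R) (Sbar C : {set 'I_n}).
Hypothesis mp : forall i, measurable_fun setT (p i).
Hypothesis CS : C \subset Sbar.
Hypothesis NI : nulls_independent P p Sbar.

Lemma sigma_of_box (J : {set 'I_n}) (B : 'I_n -> set R) :
  (forall i, measurable (B i)) ->
  sigma_of p J [set t | forall i, i \in J -> B i (p i t)].
Proof.
move=> mB.
pose G := [set E | exists i B, i \in J /\ measurable B /\ E = p i @^-1` B].
have -> : [set t | forall i, i \in J -> B i (p i t)] =
   \bigcap_(i in [set i | i \in J]) (p i @^-1` B i).
  by apply/seteqP; split => t /= H i; apply: H.
have : @measurable _ (g_sigma_algebraType G) (\bigcap_(i in [set i | i \in J]) (p i @^-1` B i)).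
  apply: fin_bigcap_measurable; first exact: finite_finset.
  move=> i /= iJ; apply: sub_sigma_algebra; exists i, (B i); split => //.
done.
Qed.


Lemma HbP_of (B : 'I_n -> set R) : (forall i, measurable (B i)) ->
  P [set t | forall i, B i (p i t)] =
  (P [set t | forall i, i \notin C -> B i (p i t)] * \prod_(i in C) P (p i @^-1` B i))%E.
Proof.
move=> mB.
pose E := [set t | forall i, i \in ~: Sbar -> B i (p i t)].
have sE : sigma_of p (~: Sbar) E by exact: sigma_of_box.
have h1 := NI mB sE.
pose B' := fun i => if i \in C then setT else B i.
have mB' i : measurable (B' i) by rewrite /B'; case: ifP.
have h2 := NI mB' sE.
have e1 : E `&` \bigcap_(v in [set v | v \in Sbar]) (p v @^-1` B v) =
          [set t | forall i, B i (p i t)].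
  apply/seteqP; split => t /=.
    case=> HE HS i; have [iS|iS] := boolP (i \in Sbar).
      exact: HS.
    by apply: HE; rewrite inE.
  move=> H; split => i _; exact: H.
have e2 : E `&` \bigcap_(v in [set v | v \in Sbar]) (p v @^-1` B' v) =
          [set t | forall i, i \notin C -> B i (p i t)].
  apply/seteqP; split => t /=.
    case=> HE HS i iC; have [iS|iS] := boolP (i \in Sbar).
      by have := HS i iS; rewrite /B' (negbTE iC).
    by apply: HE; rewrite inE.
  move=> H; split => i.
    rewrite inE => iS; apply: H; apply/negP => iC; move/negP: iS; apply.
    exact: (fintype.subsetP CS _ iC).
  by rewrite /= /B'; case: ifP => // /negbT iC _; apply: H.
rewrite -e1 h1 -e2 h2.
rewrite (bigID (fun i => i \in C)) /=.
have -> : (\prod_(i in Sbar | i \in C) P (p i @^-1` B i) = \prod_(i in C) P (p i @^-1` B i))%E.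
  apply: eq_bigl => i; case: (boolP (i \in C)) => iC; rewrite ?andbT ?andbF //.
  exact: (fintype.subsetP CS _ iC).
have -> : (\prod_(i in Sbar) P (p i @^-1` B' i) =
          \prod_(i in Sbar | i \notin C) P (p i @^-1` B i))%E.
  rewrite (bigID (fun i => i \in C)) /=.
  rewrite big1 ?mul1e; last first.
    by move=> i /andP[_ iC]; rewrite /B' iC preimage_setT probability_setT.
  by apply: eq_bigr => i /andP[_ iC]; rewrite /B' (negbTE iC).
by rewrite -muleA [X in (_ * X)%E]muleC.
Qed.

End indep.

Section cdf.
Context {R : realType} {d' : measure_display} {T' : measurableType d'} (Q : probability T' R).

Lemma measurable_le {dd} {TT : measurableType dd} (f g : TT -> R) :
  measurable_fun setT f -> measurable_fun setT g -> measurable [set x | f x <= g x].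
Proof.
move=> mf mg.
have h1 : measurable [set true] by [].
have := measurable_realfun.measurable_fun_ler mf mg measurableT h1.
rewrite setTI; congr measurable; apply/seteqP; split => x /=; by [move=> ->|].
Qed.

Lemma finQ A : measurable A -> Q A = (fine (Q A))%:E.
Proof. by move=> mA; rewrite fineK // fin_num_measure. Qed.

Context (Z : T' -> R) (mZ : measurable_fun setT Z).

Definition Hc a := fine (Q [set s | Z s <= a]).

Lemma mZle a : measurable [set s | Z s <= a].
Proof. by apply: measurable_le => //; exact: measurable_cst. Qed.

Lemma Hc_le a b : a <= b -> Hc a <= Hc b.
Proof.
move=> ab; rewrite /Hc -lee_fin -!finQ; try exact: mZle.
apply: le_measure; rewrite ?inE; try exact: mZle.
by move=> s /= /le_trans; apply.
Qed.

Lemma union_bound (a : nat -> R) (c : R) :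
  {homo a : k l / (k <= l)%N >-> k <= l} -> (forall k, Hc (a k) <= c) ->
  (Q (\bigcup_k [set s | (Z s <= a k)%R]) <= c%:E)%E.
Proof.
move=> ha Hac.
pose F k := [set s | Z s <= a k].
have mF k : measurable (F k) by exact: mZle.
have hF : {homo F : k l / (k <= l)%N >-> (k <= l)%O}.
  by move=> k l kl; apply/subsetPset => s /= h; exact: le_trans h (ha _ _ kl).
have cv := nondecreasing_cvg_mu (mu := Q) mF (bigcupT_measurable _ mF) hF.
rewrite -(cvg_lim _ cv) //.
apply: lime_le; first by apply/cvg_ex; eexists; exact: cv.
near=> k => /=; rewrite finQ // lee_fin; exact: Hac.
Unshelve. all: by end_near.
Qed.

Lemma cdf_bound (W : T' -> R) (c : R) : (forall s, Z s <= W s) ->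
  measurable [set s | Hc (W s) <= c] -> 0 <= c ->
  (Q [set s | (Hc (W s) <= c)%R] <= c%:E)%E.
Proof.
move=> ZW mE c0.
pose I := [set a | Hc a <= c].
have Idown a b : I b -> a <= b -> I a.
  by move=> Ib ab; rewrite /I /= (le_trans (Hc_le ab)).
have EI s : Hc (W s) <= c -> I (Z s).
  by move=> h; apply: Idown h _; exact: ZW.
have key (a : nat -> R) : {homo a : k l / (k <= l)%N >-> k <= l} ->
    (forall k, I (a k)) -> (forall x, I x -> exists k, x <= a k) ->
    (Q [set s | (Hc (W s) <= c)%R] <= c%:E)%E.
  move=> ha Ia cov.
  apply: le_trans (union_bound ha Ia).
  apply: le_measure; rewrite ?inE //.
    by apply: bigcupT_measurable => k; exact: mZle.
  move=> s /EI /cov [k hk]; exists k => //.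
have [[a0 Ia0]|noI] := pselect (exists a, I a); last first.
  have -> : [set s | Hc (W s) <= c] = set0.
    by apply/seteqP; split => s //= /EI Is; apply: noI; exists (Z s).
  by rewrite measure0 lee_fin.
have [ubI|nubI] := pselect (has_ubound I); last first.
  apply: (key (fun k => k%:R)).
  - by move=> k l kl; rewrite ler_nat.
  - move=> k; apply: contrapT => nIk; apply: nubI; exists k%:R => x Ix.
    by apply/negP => /negP; rewrite -ltNge => kx; apply: nIk; apply: Idown Ix (ltW kx).
  - move=> x _; exists (Num.truncn x).+1; exact/ltW/truncnS_gt.
have supI : has_sup I by split => //; exists a0.
pose m := sup I.
have [Im|nIm] := pselect (I m).
  apply: (key (fun=> m)) => //.
  by move=> x Ix; exists 0%N; exact: sup_upper_bound.
apply: (key (fun k => m - (k.+1%:R)^-1)).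
- move=> k l kl; rewrite lerD2l lerN2 lef_pV2 ?posrE ?ltr0Sn //.
  by rewrite ler_nat ltnS.
- move=> k.
  have kp : 0 < (k.+1%:R : R)^-1 by rewrite invr_gt0 ltr0Sn.
  have [e Ie he] := sup_adherent kp supI.
  exact: Idown Ie (ltW he).
- move=> x Ix.
  have xm : x < m.
    rewrite lt_neqAle sup_upper_bound // andbT.
    by apply/eqP => xm; apply: nIm; rewrite -xm.
  exists (Num.truncn ((m - x)^-1)).
  rewrite lerBrDr addrC -lerBrDr.
  rewrite -[m - x]invrK lef_pV2 ?posrE ?invr_gt0 ?subr_gt0 ?ltr0Sn //.
  by rewrite !invrK; exact/ltW/truncnS_gt.
Qed.

End cdf.

Lemma tnth_splice {R : Type} {n} (C : {set 'I_n}) (a b : 'I_n -> R) i :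
  tnth (splice C a b) i = if i \in C then a i else b i.
Proof. by rewrite /splice tnth_mktuple. Qed.

Lemma splice_eqr {R : Type} {n} (C : {set 'I_n}) (a b b' : 'I_n -> R) :
  (forall i, i \notin C -> b i = b' i) -> splice C a b = splice C a b'.
Proof.
move=> h; apply: eq_mktuple => i; case: ifPn => // iC; exact: h.
Qed.

Lemma measurable_splice {R : realType} {dd} {TT : measurableType dd} {n}
  (C : {set 'I_n}) (a b : 'I_n -> TT -> R) :
  (forall i, measurable_fun setT (a i)) -> (forall i, measurable_fun setT (b i)) ->
  measurable_fun setT (fun t => splice C (fun w => a w t) (fun w => b w t)).
Proof.
move=> ma mb; apply/measurable_fun_tnthP => i.
rewrite (_ : _ \o _ = if i \in C then a i else b i).
  by case: ifP.
by apply/funext => t /=; rewrite tnth_splice; case: ifP.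
Qed.

Section final.
Context {R : realType} {d : measure_display} {T : measurableType d} (P : probability T R)
 {d' : measure_display} {T' : measurableType d'} (Q : probability T' R) (n : nat)
 (p : 'I_n -> T -> R) (u X' : 'I_n -> T' -> R) (C : {set 'I_n}) (f : n.-tuple R -> R).
Hypothesis mp : forall i, measurable_fun setT (p i).
Hypothesis mu : forall i, measurable_fun setT (u i).
Hypothesis mX' : forall i, measurable_fun setT (X' i).
Hypothesis mf : measurable_fun setT f.
Hypothesis HbP : forall B : 'I_n -> set R, (forall i, Hl (B i)) ->
  P [set t | forall i, B i (p i t)] =
  (P [set t | forall i, i \notin C -> B i (p i t)] * \prod_(i in C) P (p i @^-1` B i))%E.
Hypothesis HbQ : forall B : 'I_n -> set R, (forall i, Hl (B i)) ->
  Q [set s | forall i, i \in C -> B i (X' i s)] = (\prod_(i in C) P (p i @^-1` B i))%E.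
Hypothesis HW : forall t s,
  f (splice C (fun w => u w s) (fun w => p w t)) <= f (Phi2 p X' C (t, s)).

Lemma mS (c : R) : measurable [set z : n.-tuple R |
  (Q [set s | (f (splice C (fun w => u w s) (tnth z)) <= f z)%R] <= c%:E)%E].
Proof.
pose A := [set zs : n.-tuple R * T' |
   f (splice C (fun w => u w zs.2) (fun w => tnth zs.1 w)) <= f zs.1].
have mA : measurable A.
  apply: measurable_le.
    apply: measurableT_comp => //.
    apply: (@measurable_splice _ _ _ _ C (fun w (zs : n.-tuple R * T') => u w zs.2) (fun w (zs : n.-tuple R * T') => tnth zs.1 w)).
      by move=> i; exact: measurableT_comp.
    by move=> i; exact: (measurableT_comp (measurable_tnth i) measurable_fst).
  exact: (measurableT_comp mf measurable_fst).
have := measurable_fun_xsection Q mA.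
have -> : (Q \o xsection A) = (fun z => Q [set s | f (splice C (fun w => u w s) (tnth z)) <= f z]).
  apply/funext => z /=; congr (Q _); apply/seteqP; split => s /=;
    by rewrite /xsection /= inE.
move=> h.
by rewrite -[X in measurable X]setTI; apply: measurable_lee.
Qed.

Lemma final_bound : super_uniform P (ptilde Q u C f p).
Proof.
move=> c /andP[c0 c1].
pose S := [set z : n.-tuple R |
  (Q [set s | (f (splice C (fun w => u w s) (tnth z)) <= f z)%R] <= c%:E)%E].
have mSc : measurable S := mS c.
have mA z : measurable [set s | (f (splice C (fun w => u w s) (tnth z)) <= f z)%R].
  apply: measurable_le.
    apply: measurableT_comp => //.
    exact: (@measurable_splice _ _ _ _ C u (fun w (_ : T') => tnth z w)).
  exact: measurable_cst.
have -> : [set t | ptilde Q u C f p t <= c] = Xt p @^-1` S.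
  have e t : splice C (fun w => p w t) (fun w => p w t) = Xt p t.
    by apply: eq_mktuple => i; rewrite if_same.
  have e2 t : (fun w => p w t) = tnth (Xt p t).
    by apply/funext => w; rewrite tnth_mktuple.
  apply/seteqP; split => t /=; rewrite /ptilde /Fcdf e e2.
    by rewrite /S /= (finQ Q (mA _)) lee_fin.
  by rewrite /S /= (finQ Q (mA _)) lee_fin.
rewrite (main_eq mp mX' HbP HbQ mSc).
have mPS : measurable (Phi2 p X' C @^-1` S).
  by rewrite -[X in measurable X]setTI; exact: (mPhi2 C mp mX' measurableT mSc).
rewrite /product_measure1 /=.
apply: (@le_trans _ _ (\int[P]_x (cst c%:E) x)%E); last first.
  have PT : (P : {measure set T -> \bar R}) setT = 1%E by exact: probability_setT.
  by rewrite integral_cst // PT mule1.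
apply: ge0_le_integral => //.
- exact: measurable_fun_xsection.
move=> t _ /=.
pose Z s := f (splice C (fun w => u w s) (fun w => p w t)).
pose W s := f (Phi2 p X' C (t, s)).
have mZ : measurable_fun setT Z.
  apply: measurableT_comp => //.
  exact: (@measurable_splice _ _ _ _ C u (fun w (_ : T') => p w t)).
have ex : xsection (Phi2 p X' C @^-1` S) t = [set s | (Hc Q Z (W s) <= c)%R].
  apply/seteqP; split => s /=; rewrite /xsection /= inE /S /=;
  (have -> : [set s' | (f (splice C (u^~ s') (tnth (Phi2 p X' C (t, s)))) <= f (Phi2 p X' C (t, s)))%R] = [set s' | (Z s' <= W s)%R]
    by apply/seteqP; split => s' /=;
       rewrite (@splice_eqr _ _ C _ (tnth (Phi2 p X' C (t, s))) (fun w => p w t)) // => i iC;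
       rewrite tnth_mktuple (negbTE iC));
  by rewrite /Hc (finQ Q (mZle mZ _)) lee_fin.
rewrite ex; apply: cdf_bound => //.
  by move=> s; exact: HW.
by rewrite -ex; exact: measurable_xsection.
Qed.
End final.

Section unif.
Context {R : realType}.
Local Notation mu := (@lebesgue_measure R).

Lemma uprobE (A : set R) : measurable A ->
  uniform_prob (@ltr01 R) A = mu (A `&` `[0, 1]%classic).
Proof.
move=> mA; rewrite /uniform_prob integral_uniform_pdf.
rewrite (eq_integral (fun=> 1%:E)); last first.
  move=> x; rewrite inE /= in_itv /= => -[_ xi].
  by rewrite /uniform_pdf xi subr0 invr1.
by rewrite integral_cst ?mul1e //; apply: measurableI.
Qed.

Lemma uprob_le c : 0 <= c <= 1 -> uniform_prob (@ltr01 R) [set x | x <= c] = c%:E.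
Proof.
case/andP => c0 c1.
rewrite uprobE; last by apply: Hl_measurable; right; exists c.
have -> : [set x | x <= c] `&` `[0, 1]%classic = `[0, c]%classic.
  apply/seteqP; split => x /=; rewrite !in_itv /=.
    by case=> xc /andP[x0 x1]; rewrite x0 xc.
  by case/andP => x0 xc; split => //; rewrite x0 (le_trans xc c1).
rewrite lebesgue_measure_itv /= lte_fin.
case: (ltrP 0 c) => [c_gt0|c_le0].
  by rewrite oppr0 adde0.
by have -> : c = 0 by apply/eqP; rewrite eq_le c_le0 c0.
Qed.

Lemma uprob_oo c : 0 <= c <= 1 -> uniform_prob (@ltr01 R) [set x | 0 < x < c] = c%:E.
Proof.
case/andP => c0 c1.
have eA : [set x : R | 0 < x < c] = `]0, c[%classic.
  by apply/seteqP; split => x /=; rewrite in_itv.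
rewrite uprobE; last by rewrite eA; exact: measurable_itv.
have -> : [set x | 0 < x < c] `&` `[0, 1]%classic = `]0, c[%classic.
  apply/seteqP; split => x /=; rewrite !in_itv /=.
    by case.
  case/andP => x0 xc; split; first by rewrite x0.
  by rewrite (ltW x0) (le_trans (ltW xc) c1).
rewrite lebesgue_measure_itv /= lte_fin.
case: (ltrP 0 c) => [c_gt0|c_le0].
  by rewrite oppr0 adde0.
by have -> : c = 0 by apply/eqP; rewrite eq_le c_le0 c0.
Qed.

Lemma uprob_ge1 : uniform_prob (@ltr01 R) [set x | 1 <= x] = 0.
Proof.
have eA : [set x : R | 1 <= x] = `[1, +oo[%classic.
  by apply/seteqP; split => x /=; rewrite in_itv /= andbT.
rewrite uprobE; last by rewrite eA; exact: measurable_itv.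
have -> : [set x : R | 1 <= x] `&` `[0, 1]%classic = `[1, 1]%classic.
  apply/seteqP; split => x /=; rewrite !in_itv /=.
    by case=> -> /andP[_ ->].
  by case/andP => x1 x1'; split => //; rewrite x1' (le_trans ler01 x1).
by rewrite lebesgue_measure_itv /= lte_fin ltxx.
Qed.

End unif.

Section quantile.
Context {R : realType} {d : measure_display} {T : measurableType d} (P : probability T R)
  (X : T -> R) (mX : measurable_fun setT X) (SU : super_uniform P X).

Local Notation F := (Hc P X).

Lemma F_ge0 a : 0 <= F a.
Proof. by apply: fine_ge0; exact: measure_ge0. Qed.

Lemma F_le1 a : F a <= 1.
Proof. by rewrite -lee_fin -(finQ P (mZle mX a)); exact: probability_le1 (mZle mX a). Qed.

Lemma F_leid a : 0 <= a <= 1 -> F a <= a.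
Proof. by move=> ha; rewrite -lee_fin -(finQ P (mZle mX a)); exact: SU. Qed.

Lemma F_neg a : a < 0 -> F a = 0.
Proof.
move=> a0; apply/eqP; rewrite eq_le F_ge0 andbT.
apply: le_trans (Hc_le P mX (ltW a0)) _.
by apply: F_leid; rewrite lexx ler01.
Qed.

Lemma F_right a u : (forall k : nat, u <= F (a + k.+1%:R^-1)) -> u <= F a.
Proof.
move=> H.
pose G k := [set t | X t <= a + k.+1%:R^-1].
have mG k : measurable (G k) by exact: mZle.
have hG : {homo G : k l / (k <= l)%N >-> (l <= k)%O}.
  move=> k l kl; apply/subsetPset => t /= h; apply: le_trans h _.
  by rewrite lerD2l lef_pV2 ?posrE ?ltr0Sn // ler_nat ltnS.
have eG : \bigcap_k G k = [set t | X t <= a].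
  apply/seteqP; split => t /=; last first.
    move=> h k _; apply: le_trans h _; rewrite lerDl invr_ge0; exact: ler0n.
  move=> h; rewrite leNgt; apply/negP => at_.
  have := h (Num.truncn ((X t - a)^-1)) I; rewrite /G /= -lerBlDl.
  rewrite -[X t - a]invrK lef_pV2 ?posrE ?invr_gt0 ?subr_gt0 ?ltr0Sn // invrK.
  by apply/negP; rewrite -ltNge; exact: truncnS_gt.
have G0 : (P (G 0%N) < +oo)%E by exact: le_lt_trans (probability_le1 _ (mG 0%N)) (ltry _).
have cv := nonincreasing_cvg_mu G0 mG (bigcapT_measurable mG) hG.
rewrite -lee_fin -(finQ P (mZle mX a)) -eG -(cvg_lim _ cv) //.
apply: lime_ge; first by apply/cvg_ex; eexists; exact: cv.
by near=> k => /=; rewrite (finQ P (mG k)) lee_fin; exact: H.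
Unshelve. all: by end_near.
Qed.


Lemma F_top u : u < 1 -> exists a, u < F a.
Proof.
move=> u1; apply: contrapT => H.
have Hk k : F (k%:R) <= u.
  by rewrite leNgt; apply/negP => h; apply: H; exists k%:R.
have := union_bound (Q := P) mX (a := fun k => k%:R) (c := u) _ Hk.
have -> : \bigcup_k [set s | (X s <= k%:R)%R] = setT.
  apply/seteqP; split => // t _; exists (Num.truncn (X t)).+1 => //=.
  exact/ltW/truncnS_gt.
rewrite probability_setT lee_fin => /(_ _) h.
have : (1 <= u)%R by apply: h => k l kl; rewrite ler_nat.
by rewrite leNgt u1.
Qed.

Definition Sq u := [set a | u <= F a].
Definition q u := if (0 < u < 1) then inf (Sq u) else u.

Lemma Sq_lb u : 0 < u -> lbound (Sq u) 0.
Proof.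
move=> u0 a; rewrite /Sq /= => ua; rewrite leNgt; apply/negP => a0.
by move: ua; rewrite F_neg // leNgt u0.
Qed.

Lemma Sq_ne u : u < 1 -> Sq u !=set0.
Proof. by move=> /F_top [a ha]; exists a; exact: ltW. Qed.

Lemma q_galois u a : 0 < u < 1 -> (q u <= a) = (u <= F a).
Proof.
case/andP => u0 u1; rewrite /q u0 u1 /=.
have hl : has_lbound (Sq u) by exists 0; exact: Sq_lb.
apply/idP/idP => h; last exact: ge_inf.
apply: le_trans (Hc_le P mX h); apply: F_right => k.
have ep : inf (Sq u) < inf (Sq u) + k.+1%:R^-1 by rewrite ltrDl invr_gt0 ltr0Sn.
have [y Sy yl] := @inf_lt _ (Sq u) (inf (Sq u) + k.+1%:R^-1) (Sq_ne u1) ep.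
exact: le_trans Sy (Hc_le P mX (ltW yl)).
Qed.

Lemma q_ge u : u <= q u.
Proof.
rewrite /q; case: ifPn => // /andP[u0 u1].
apply: lb_le_inf; first exact: Sq_ne.
move=> a; rewrite /Sq /= => ua; rewrite leNgt; apply/negP => au.
have [a0|a0] := ltrP a 0.
  by move: ua; rewrite F_neg // leNgt u0.
have := F_leid (a := a); rewrite a0 (le_trans (ltW au) (ltW u1)) => /(_ isT) Fa.
by move: (le_trans ua Fa); rewrite leNgt au.
Qed.

Lemma q_pre a : q @^-1` [set x | x <= a] =
  ([set x | 0 < x < 1] `&` [set x | x <= F a]) `|` (~` [set x | 0 < x < 1] `&` [set x | x <= a]).
Proof.
apply/seteqP; split => x /=.
  case: (boolP (0 < x < 1)) => hx.
    by rewrite q_galois // => h; left.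
  by rewrite /q (negbTE hx) => h; right.
case=> -[hx h].
  by rewrite q_galois.
by rewrite /q ifN //; apply/negP.
Qed.

Lemma mq : measurable_fun setT q.
Proof.
apply: (measurability Hl Hl_gen) => _ [A [->|[a ->]] <-].
  by rewrite preimage_setT setTI.
have m01 : measurable [set x : R | 0 < x < 1].
  rewrite (_ : [set x : R | 0 < x < 1] = `]0, 1[%classic); first exact: measurable_itv.
  by apply/seteqP; split => x /=; rewrite in_itv.
rewrite setTI q_pre; apply: measurableU; apply: measurableI => //.
- by apply: Hl_measurable; right; eexists.
- exact: measurableC.
- by apply: Hl_measurable; right; eexists.
Qed.

Lemma q_cdf {d'} {T' : measurableType d'} (Q : probability T' R) (U : T' -> R)
  (UU : uniform01 Q U) a :
  Q ((q \o U) @^-1` [set x | x <= a]) = (F a)%:E.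
Proof.
have mA : measurable (q @^-1` [set x | x <= a]).
  by rewrite -[X in measurable X]setTI; apply: mq => //; apply: Hl_measurable; right; eexists.
have mF : measurable [set x : R | x <= F a] by apply: Hl_measurable; right; eexists.
have m1 : measurable [set x : R | 1 <= x].
  rewrite (_ : [set x : R | 1 <= x] = `[1, +oo[%classic); first exact: measurable_itv.
  by apply/seteqP; split => x /=; rewrite in_itv /= andbT.
have m0 : measurable [set x : R | 0 < x < F a].
  rewrite (_ : [set x : R | 0 < x < F a] = `]0, F a[%classic); first exact: measurable_itv.
  by apply/seteqP; split => x /=; rewrite in_itv.
rewrite comp_preimage UU //.
have Fa0 := F_ge0 a; have Fa1 := F_le1 a.
apply/eqP; rewrite eq_le; apply/andP; split.
  apply: (@le_trans _ _ (uniform_prob (@ltr01 R) ([set x | x <= F a] `|` [set x | 1 <= x]))).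
    apply: le_measure; rewrite ?inE //; first exact: measurableU.
    move=> x; rewrite q_pre /= => -[[/andP[x0 x1] xF]|[hx xa]].
      by left.
    case: (ltrP 0 x) => x0.
      right; rewrite leNgt; apply/negP => x1; apply: hx; by rewrite x0 x1.
    by left; exact: le_trans x0 Fa0.
  apply: (@le_trans _ _ (uniform_prob (@ltr01 R) [set x : R | (x <= F a)%R] +
                         uniform_prob (@ltr01 R) [set x : R | (1 <= x)%R])%E).
    exact: measureU2.
  by rewrite uprob_le ?Fa0 ?Fa1 // uprob_ge1 adde0.
apply: (@le_trans _ _ (uniform_prob (@ltr01 R) [set x | 0 < x < F a])).
  by rewrite uprob_oo ?Fa0 ?Fa1.
apply: le_measure; rewrite ?inE //.
move=> x /= /andP[x0 xF]; rewrite q_galois ?x0 ?(lt_le_trans xF Fa1) //.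
exact: ltW.
Qed.

End quantile.

Theorem lemma1 (R : realType) (n : nat)
  (d : measure_display) (T : measurableType d) (P : probability T R)
  (p : 'I_n -> {RV P >-> R})
  (Sbar : {set 'I_n})
  (e : rel 'I_n)
  (f : 'I_n -> n.-tuple R -> R)
  (d' : measure_display) (T' : measurableType d') (Q : probability T' R)
  (u : 'I_n -> {RV Q >-> R}) :
  acyclic e ->
  (forall v w, v \notin Sbar -> connect e w v -> w \notin Sbar) ->
  (forall v, measurable_fun [set: n.-tuple R] (f v)) ->
  mutually_independent Q (fun w => u w : T' -> R) ->
  (forall w, uniform01 Q (u w)) ->
  nulls_independent P (fun w => p w : T -> R) Sbar ->
  (* (a) *)
  ((forall v, v \in Sbar -> uniform01 P (p v)) ->
     forall v, v \in Sbar ->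
       super_uniform P
         (ptilde Q (fun w => u w : T' -> R) (desc_set e v) (f v)
                 (fun w => p w : T -> R)))
  /\
  (* (b) *)
  ((forall v, v \in Sbar -> super_uniform P (p v)) ->
     forall v, v \in Sbar ->
       (forall x y : n.-tuple R,
          (forall w, w \notin desc_set e v -> tnth x w = tnth y w) ->
          (forall w, w \in desc_set e v -> tnth x w <= tnth y w) ->
          f v x <= f v y) ->
       super_uniform P
         (ptilde Q (fun w => u w : T' -> R) (desc_set e v) (f v)
                 (fun w => p w : T -> R))).
Proof.
move=> acyc anc mf MI Uu NI.
have mp w : measurable_fun setT (p w : T -> R) by exact: measurable_funPT.
have mu w : measurable_fun setT (u w : T' -> R) by exact: measurable_funPT.
have CS v : v \in Sbar -> desc_set e v \subset Sbar.
  move=> vS; apply/fintype.subsetP => w; rewrite inE => vw; apply: contraT => wS.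
  by have := anc w v wS vw; rewrite vS.
split.
- move=> Up v vS.
  have CSv := CS v vS.
  apply: (@final_bound _ _ _ P _ _ Q n (fun w => p w : T -> R) (fun w => u w : T' -> R)
            (fun w => u w : T' -> R) (desc_set e v) (f v)) => //.
  + move=> B HB; apply: (HbP_of CSv NI) => i; exact: Hl_measurable.
  + move=> B HB.
    have mB i : measurable (B i) by exact: Hl_measurable.
    have := MI (desc_set e v) B mB.
    have -> : \bigcap_(i in [set i | i \in desc_set e v]) ((u i : T' -> R) @^-1` B i) =
              [set s | forall i, i \in desc_set e v -> B i (u i s)].
      by apply/seteqP; split => s /= H i; apply: H.
    move=> ->; apply: eq_bigr => i iC.
    rewrite Uu //; symmetry; apply: (Up i _ (B i) (mB i)).
    exact: (fintype.subsetP CSv).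
- move=> SUp v vS mono.
  have CSv := CS v vS.
  pose C := desc_set e v.
  pose qq w := q P (p w : T -> R).
  pose X' w := if w \in C then qq w \o (u w : T' -> R) else (u w : T' -> R).
  have SUC w : w \in C -> super_uniform P (p w) by move=> wC; apply: SUp; exact: (fintype.subsetP CSv).
  have mX' w : measurable_fun setT (X' w).
    rewrite /X'; case: ifP => wC; last exact: mu.
    apply: measurableT_comp (mu w); exact: (mq (mp w) (SUC w wC)).
  apply: (@final_bound _ _ _ P _ _ Q n (fun w => p w : T -> R) (fun w => u w : T' -> R)
            X' C (f v)) => //.
  + move=> B HB; apply: (HbP_of CSv NI) => i; exact: Hl_measurable.
  + move=> B HB.
    have mB i : measurable (B i) by exact: Hl_measurable.
    pose B2 i := if i \in C then qq i @^-1` B i else setT.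
    have mB2 i : measurable (B2 i).
      rewrite /B2; case: ifP => iC //.
      by rewrite -[X in measurable X]setTI; apply: (mq (mp i) (SUC i iC)).
    have := MI C B2 mB2.
    have -> : \bigcap_(i in [set i | i \in C]) ((u i : T' -> R) @^-1` B2 i) =
              [set s | forall i, i \in C -> B i (X' i s)].
      apply/seteqP; split => s /= H i iC; have := H i iC; by rewrite /B2 /X' iC.
    move=> ->; apply: eq_bigr => i iC.
    rewrite /B2 iC.
    case: (HB i) => [->|[a ->]].
      rewrite !preimage_setT; transitivity (1%E : \bar R); first exact: probability_setT.
      by symmetry; exact: probability_setT.
    transitivity (Hc P (p i : T -> R) a)%:E.
      exact: (q_cdf (mp i) (SUC i iC) (Uu i) a).
    by symmetry; exact: (finQ P (mZle (mp i) a)).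
  + move=> t s; apply: mono => w; rewrite tnth_splice /Phi2 tnth_mktuple.
      by move/negbTE => ->.
    move=> wC; rewrite wC /X' wC /=.
    exact: (q_ge (mp w) (SUC w wC)).
Qed.
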